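(* Let $E\subseteq\mathbb{R}$ and let $f:E\to\mathbb{R}$ be Abel continuous on $E$. Then $f$ is continuous on $E$ in the ordinary sense.
   Context: A sequence $(p_n)_{n\ge 0}$ of real numbers is Abel convergent to $\ell\in\mathbb{R}$ if the series $\sum_{k=0}^{\infty}p_k x^k$ converges for every $0\le x<1$ and $\lim_{x\to 1^-}(1-x)\sum_{k=0}^{\infty}p_k x^k=\ell$. A function $f:E\to\mathbb{R}$ is Abel continuous on $E$ if for every sequence $(p_n)$ of points of $E$ that is Abel convergent to a point $\ell\in E$, the sequence $(f(p_n))$ is Abel convergent to $f(\ell)$. *)

(* Defs.v *)
From Stdlib Require Import Reals.
From Coquelicot Require Import Coquelicot.
Open Scope R_scope.

Definition abel_convergent (p : nat -> R) (l : R) : Prop :=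
  (forall x : R, 0 <= x < 1 -> ex_series (fun k => p k * x ^ k)) /\
  filterlim (fun x => (1 - x) * Series (fun k => p k * x ^ k))
            (at_left 1) (locally l).

(* f : E -> R (modelled as f : R -> R, only its values on E matter)
   is Abel continuous on E. *)
Definition abel_continuous_on (E : R -> Prop) (f : R -> R) : Prop :=
  forall (p : nat -> R) (l : R),
    (forall n, E (p n)) -> E l -> abel_convergent p l ->
    abel_convergent (fun n => f (p n)) (f l).

(* Main.v *)
Require Import Defs.
From Stdlib Require Import Reals Lra IndefiniteDescription Classical.
From Coquelicot Require Import Coquelicot.
Open Scope R_scope.

Lemma pow_le_one (x : R) (n : nat) : 0 <= x -> x <= 1 -> x ^ n <= 1.
Proof.
  intros H0 H1. induction n; simpl. lra.
  assert (0 <= x ^ n) by (apply pow_le; lra). nra.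
Qed.

Lemma at_left_ex (P : R -> Prop) : at_left 1 P -> exists x, 0 <= x < 1 /\ P x.
Proof.
  intros [e He].
  exists (Rmax 0 (1 - e/2)).
  assert (Hpos := cond_pos e).
  assert (0 <= Rmax 0 (1 - e/2) < 1).
  { split. apply Rmax_l. apply Rmax_lub_lt; lra. }
  split; auto. apply He; [|lra].
  change (Rabs (Rmax 0 (1 - e/2) - 1) < e).
  rewrite Rabs_left by lra.
  assert (1 - e/2 <= Rmax 0 (1 - e/2)) by apply Rmax_r. lra.
Qed.

Lemma geom_ex x : 0 <= x < 1 -> ex_series (fun n => x ^ n).
Proof. intros H. exists (/ (1 - x)). apply is_series_geom. rewrite Rabs_pos_eq; lra. Qed.

Lemma geom_S x : 0 <= x < 1 -> Series (fun n => x ^ n) = / (1 - x).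
Proof. intros H. apply Series_geom. rewrite Rabs_pos_eq; lra. Qed.

Lemma fast_abel (y : nat -> R) (x0 : R) :
  (forall n, Rabs (y n - x0) < (1/2) ^ n) -> abel_convergent y x0.
Proof.
  intros Hy.
  assert (Ha : forall x, 0 <= x < 1 -> ex_series (fun k => (y k - x0) * x ^ k)).
  { intros x Hx. apply (@ex_series_le R_AbsRing R_CompleteNormedModule) with (b := fun n => (1/2)^n).
    intros n. change (norm _) with (Rabs ((y n - x0) * x ^ n)).
    rewrite Rabs_mult. rewrite (Rabs_pos_eq (x^n)) by (apply pow_le; lra).
    assert (x ^ n <= 1) by (apply pow_le_one; lra).
    assert (Hn := Hy n). assert (0 <= x^n) by (apply pow_le; lra).
    assert (0 <= Rabs (y n - x0)) by apply Rabs_pos. nra.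
    apply geom_ex; lra. }
  assert (Hs : forall x, 0 <= x < 1 -> ex_series (fun k => y k * x ^ k)).
  { intros x Hx. eapply ex_series_ext.
    2: apply (ex_series_plus _ _ (Ha x Hx) (ex_series_scal_l x0 _ (geom_ex x Hx))).
    intros n. unfold plus, scal; simpl. unfold mult; simpl. ring. }
  split; auto.
  apply filterlim_locally. intros eps.
  assert (Hpos := cond_pos eps).
  exists (mkposreal (Rmin (eps/4) 1) ltac:(apply Rmin_pos; lra)). intros x Hx Hx1.
  change (Rabs (x - 1) < Rmin (eps/4) 1) in Hx.
  rewrite Rabs_left in Hx by lra.
  assert (Rmin (eps/4) 1 <= eps/4) by apply Rmin_l.
  assert (Rmin (eps/4) 1 <= 1) by apply Rmin_r.
  change (Rabs ((1 - x) * Series (fun k => y k * x ^ k) - x0) < eps).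
  destruct (Rle_or_lt 0 x) as [Hx0|Hx0].
  2:{ lra. }
  assert (Hx' : 0 <= x < 1) by lra.
  assert (E : Series (fun k => y k * x ^ k) =
              Series (fun k => (y k - x0) * x ^ k) + x0 * Series (fun k => x ^ k)).
  { rewrite <- Series_scal_l. rewrite <- Series_plus.
    apply Series_ext. intros; ring. apply Ha; auto.
    eapply ex_series_ext. 2: apply (ex_series_scal_l x0 _ (geom_ex x Hx')).
    intros; reflexivity. }
  rewrite E, geom_S by auto.
  assert (B : Rabs (Series (fun k => (y k - x0) * x ^ k)) <= 2).
  { eapply Rle_trans. apply Series_Rabs.
    { apply (@ex_series_le R_AbsRing R_CompleteNormedModule) with (b := fun n => (1/2)^n).
      intros n. change (norm _) with (Rabs (Rabs ((y n - x0) * x ^ n))).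
      rewrite Rabs_Rabsolu, Rabs_mult. rewrite (Rabs_pos_eq (x^n)) by (apply pow_le; lra).
      assert (x ^ n <= 1) by (apply pow_le_one; lra).
      assert (Hn := Hy n). assert (0 <= x^n) by (apply pow_le; lra).
      assert (0 <= Rabs (y n - x0)) by apply Rabs_pos. nra.
      apply geom_ex; lra. }
    replace 2 with (/ (1 - 1/2)) by field.
    rewrite <- geom_S by lra.
    apply Series_le. 2: apply geom_ex; lra.
    intros n. split. apply Rabs_pos.
    rewrite Rabs_mult. rewrite (Rabs_pos_eq (x^n)) by (apply pow_le; lra).
    assert (x ^ n <= 1) by (apply pow_le_one; lra).
    assert (Hn := Hy n). assert (0 <= x^n) by (apply pow_le; lra).
    assert (0 <= Rabs (y n - x0)) by apply Rabs_pos. nra. }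
  replace ((1 - x) * (Series (fun k => (y k - x0) * x ^ k) + x0 * / (1 - x)) - x0)
    with ((1 - x) * Series (fun k => (y k - x0) * x ^ k)) by (field; lra).
  rewrite Rabs_mult, Rabs_pos_eq by lra.
  assert (0 <= Rabs (Series (fun k => (y k - x0) * x ^ k))) by apply Rabs_pos.
  nra.
Qed.

Lemma one_side (E : R -> Prop) (f : R -> R) (x0 eps s : R) :
  abel_continuous_on E f -> E x0 -> 0 < eps -> s * s = 1 ->
  (forall n : nat, exists z, E z /\ Rabs (z - x0) < (1/2)^n /\ eps <= s * (f z - f x0)) ->
  False.
Proof.
  intros Hf HE Heps Hs H.
  set (y := fun n => proj1_sig (constructive_indefinite_description _ (H n))).
  assert (Hy : forall n, E (y n) /\ Rabs (y n - x0) < (1/2)^n /\ eps <= s * (f (y n) - f x0)).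
  { intros n. unfold y. destruct (constructive_indefinite_description _ (H n)); auto. }
  assert (A := Hf y x0 (fun n => proj1 (Hy n)) HE (fast_abel y x0 (fun n => proj1 (proj2 (Hy n))))).
  destruct A as [Aex Alim].
  apply filterlim_locally with (eps := mkposreal eps Heps) in Alim.
  destruct (at_left_ex _ Alim) as [x [Hx Hb]].
  change (Rabs ((1 - x) * Series (fun k => f (y k) * x ^ k) - f x0) < eps) in Hb.
  set (S := Series (fun k => f (y k) * x ^ k)) in *.
  assert (Hle : Series (fun n => eps * x ^ n) <=
                Series (fun n => s * (f (y n) * x ^ n - f x0 * x ^ n))).
  { apply Series_le.
    - intros n. assert (0 <= x^n) by (apply pow_le; lra).
      destruct (Hy n) as [_ [_ Hn]]. split. nra.
      replace (s * (f (y n) * x ^ n - f x0 * x ^ n)) with (s * (f (y n) - f x0) * x ^ n) by ring.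
      nra.
    - apply (@ex_series_scal_l R_AbsRing R_NormedModule s (fun n => f (y n) * x ^ n - f x0 * x ^ n)).
      apply (@ex_series_minus R_AbsRing R_NormedModule (fun n => f (y n) * x ^ n) (fun n => f x0 * x ^ n)).
      apply Aex; auto. apply (@ex_series_scal_l R_AbsRing R_NormedModule (f x0) (fun n => x ^ n)), geom_ex; auto. }
  rewrite !Series_scal_l in Hle.
  rewrite Series_minus in Hle.
  2: apply Aex; auto.
  2: apply (@ex_series_scal_l R_AbsRing R_NormedModule (f x0) (fun n => x ^ n)), geom_ex; auto.
  rewrite Series_scal_l, geom_S in Hle by auto.
  fold S in Hle.
  assert (Hk : eps <= s * ((1 - x) * S - f x0)).
  { replace (s * ((1 - x) * S - f x0)) with ((1 - x) * (s * (S - f x0 * / (1 - x)))) by (field; lra).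
    replace eps with ((1 - x) * (eps * / (1 - x))) at 1 by (field; lra).
    apply Rmult_le_compat_l; lra. }
  assert (Rabs (s * ((1 - x) * S - f x0)) = Rabs ((1 - x) * S - f x0)).
  { rewrite Rabs_mult. assert (Rabs s = 1).
    { assert (Rabs s * Rabs s = 1) by (rewrite <- Rabs_mult, Hs; apply Rabs_R1).
      assert (0 <= Rabs s) by apply Rabs_pos. nra. }
    rewrite H0; ring. }
  assert (s * ((1 - x) * S - f x0) <= Rabs (s * ((1 - x) * S - f x0))) by apply Rle_abs.
  lra.
Qed.

Theorem theorem1 (E : R -> Prop) (f : R -> R) :
  abel_continuous_on E f -> forall x0 : R, E x0 -> continue_in f E x0.
Proof.
  intros Hf x0 HE.
  apply NNPP. intros Hnc.
  unfold continue_in, limit1_in, limit_in in Hnc.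
  apply not_all_ex_not in Hnc. destruct Hnc as [eps Hnc].
  apply imply_to_and in Hnc. destruct Hnc as [Heps Hnc].
  assert (Hd : forall d, d > 0 -> exists z, E z /\ Rabs (z - x0) < d /\ eps <= Rabs (f z - f x0)).
  { intros d Hd. apply NNPP. intros Hno. apply Hnc. exists d. split; auto.
    intros z [[Ez Hz] Hdz]. simpl in *. unfold R_dist in *.
    apply Rnot_le_lt. intros Hle. apply Hno. exists z. auto. }
  destruct (classic (forall n : nat, exists z, E z /\ Rabs (z - x0) < (1/2)^n /\ eps <= 1 * (f z - f x0))) as [Hp|Hp].
  - apply (one_side E f x0 eps 1 Hf HE) ; auto; lra.
  - apply not_all_ex_not in Hp. destruct Hp as [m Hm].
    apply (one_side E f x0 eps (-1) Hf HE); auto; try lra.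
    intros n.
    assert (Hpos : (1/2)^(n+m) > 0) by (apply pow_lt; lra).
    destruct (Hd _ Hpos) as [z [Ez [Hz Hfz]]].
    exists z.
    assert ((1/2)^(n+m) <= (1/2)^n /\ (1/2)^(n+m) <= (1/2)^m).
    { rewrite pow_add. assert (0 < (1/2)^n) by (apply pow_lt; lra).
      assert (0 < (1/2)^m) by (apply pow_lt; lra).
      assert ((1/2)^n <= 1) by (apply pow_le_one; lra).
      assert ((1/2)^m <= 1) by (apply pow_le_one; lra). nra. }
    split; auto. split; [lra|].
    destruct (Rle_or_lt eps (f z - f x0)) as [Hc|Hc].
    + exfalso. apply Hm. exists z. split; auto. split; lra.
    + destruct (Rcase_abs (f z - f x0)) as [Hn|Hn].
      * rewrite Rabs_left in Hfz by lra. lra.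
      * rewrite Rabs_pos_eq in Hfz by lra. lra.
Qed.
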